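(* Let $T$ be an MFQST with degree bound $\phi\ge3$. Then every Steiner point $s$ of $T$ satisfies $\phi\le\deg s\le 2\phi-3$.
   Context: Let $Z=\{z_1,\dots,z_n\}\subset\mathbb{R}^2$ ($n\ge 1$) be a set of sources and $z_{BS}\in\mathbb{R}^2\setminus Z$ a sink; each source has supply $1$. A flow-dependent quadratic Steiner tree (FQST) consists of a finite set $S\subset\mathbb{R}^2$ of Steiner points and a tree $T$ with vertex set $Z\cup S\cup\{z_{BS}\}$ whose edges are directed towards $z_{BS}$. Every node other than the sink has exactly one out-edge, and the sink has none. Each edge $e$ carries a positive flow $f(e)$ such that: - at each source, the flow on its out-edge minus the total flow on its in-edges equals $1$; - at each Steiner point, the out-flow equals the total in-flow; - the sink receives total flow $n$. The cost is $L(T)=\sum_{e\in E(T)} f(e)|e|^2$. An MFQST with degree bound $\phi$ is an FQST minimising $L$ among all FQSTs (any finite $S$, any topology) in which every Steiner point has degree at least $\phi$. *)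

(* Defs.v *)
From Stdlib Require Import Reals Lra Lia List.
Import ListNotations.
Open Scope R_scope.

Definition point := (R * R)%type.

Definition dist2 (p q : point) : R :=
  (fst p - fst q) ^ 2 + (snd p - snd q) ^ 2.

Inductive vertex : Type :=
| Src : nat -> vertex
| Stn : nat -> vertex
| Sink : vertex.

Definition vertex_eq_dec (u v : vertex) : {u = v} + {u <> v}.
Proof. decide equality; apply Nat.eq_dec. Defined.

Definition valid_vertex (n m : nat) (v : vertex) : Prop :=
  match v with
  | Src i => (i < n)%nat
  | Stn j => (j < m)%nat
  | Sink => True
  end.

(* All non-sink vertices (each has exactly one out-edge (v, par v)). *)
Definition nonsink_vertices (n m : nat) : list vertex :=
  map Src (seq 0 n) ++ map Stn (seq 0 m).

Definition pos (z : nat -> point) (zBS : point) (s : nat -> point) (v : vertex) : point :=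
  match v with
  | Src i => z i
  | Stn j => s j
  | Sink => zBS
  end.

Definition Rsum {A : Type} (F : A -> R) (l : list A) : R :=
  fold_right (fun a acc => F a + acc) 0 l.

Definition children (n m : nat) (par : vertex -> vertex) (w : vertex) : list vertex :=
  filter (fun u => if vertex_eq_dec (par u) w then true else false)
         (nonsink_vertices n m).

Definition inflow (n m : nat) (par : vertex -> vertex) (f : vertex -> R) (w : vertex) : R :=
  Rsum f (children n m par w).

(* degree of a non-sink vertex: its out-edge plus its in-edges *)
Definition degree (n m : nat) (par : vertex -> vertex) (v : vertex) : nat :=
  S (length (children n m par v)).

(* An FQST for sources z_0..z_{n-1} and sink zBS: m Steiner points s_0..s_{m-1}
   (distinct points of the plane, distinct from sources and sink), a tree given by
   its parent map par (the out-edge of each non-sink vertex is (v, par v); the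
   graph is a tree directed to the sink iff iterating par reaches the sink), and
   positive edge flows f (f v = flow on the out-edge of v). *)
Definition is_FQST (n : nat) (z : nat -> point) (zBS : point)
  (m : nat) (s : nat -> point) (par : vertex -> vertex) (f : vertex -> R) : Prop :=
  (forall j1 j2, (j1 < m)%nat -> (j2 < m)%nat -> s j1 = s j2 -> j1 = j2) /\
  (forall j i, (j < m)%nat -> (i < n)%nat -> s j <> z i) /\
  (forall j, (j < m)%nat -> s j <> zBS) /\
  (forall v, In v (nonsink_vertices n m) -> valid_vertex n m (par v)) /\
  (forall v, In v (nonsink_vertices n m) -> exists k, Nat.iter k par v = Sink) /\
  (forall v, In v (nonsink_vertices n m) -> 0 < f v) /\
  (forall i, (i < n)%nat -> f (Src i) - inflow n m par f (Src i) = 1) /\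
  (forall j, (j < m)%nat -> f (Stn j) = inflow n m par f (Stn j)) /\
  inflow n m par f Sink = INR n.

Definition cost (n : nat) (z : nat -> point) (zBS : point)
  (m : nat) (s : nat -> point) (par : vertex -> vertex) (f : vertex -> R) : R :=
  Rsum (fun v => f v * dist2 (pos z zBS s v) (pos z zBS s (par v)))
       (nonsink_vertices n m).

Definition steiner_deg_bound (n m : nat) (par : vertex -> vertex) (phi : nat) : Prop :=
  forall j, (j < m)%nat -> (phi <= degree n m par (Stn j))%nat.

Definition is_MFQST (phi n : nat) (z : nat -> point) (zBS : point)
  (m : nat) (s : nat -> point) (par : vertex -> vertex) (f : vertex -> R) : Prop :=
  is_FQST n z zBS m s par f /\ steiner_deg_bound n m par phi /\
  forall m' s' par' f',
    is_FQST n z zBS m' s' par' f' -> steiner_deg_bound n m' par' phi ->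
    cost n z zBS m s par f <= cost n z zBS m' s' par' f'.

(* Main.v *)
Require Import Defs.
From Stdlib Require Import Reals Lra Lia List Permutation Classical.
Import ListNotations.
Open Scope R_scope.

Lemma Rsum_app {A} (F : A -> R) l1 l2 : Rsum F (l1 ++ l2) = Rsum F l1 + Rsum F l2.
Proof. induction l1; simpl; [lra| rewrite IHl1; lra]. Qed.

Lemma Rsum_perm {A} (F : A -> R) l1 l2 : Permutation l1 l2 -> Rsum F l1 = Rsum F l2.
Proof. induction 1; simpl; lra. Qed.

Lemma Rsum_ext_in {A} (F G : A -> R) l : (forall x, In x l -> F x = G x) -> Rsum F l = Rsum G l.
Proof. induction l; simpl; intros H; auto. rewrite H, IHl; auto. Qed.

Lemma Rsum_pos {A} (F : A -> R) l : (forall x, In x l -> 0 < F x) -> l <> [] -> 0 < Rsum F l.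
Proof.
  induction l; simpl; intros H Hn; [congruence|].
  destruct l. simpl. specialize (H a (or_introl eq_refl)). lra.
  assert (0 < Rsum F (a0 :: l)) by (apply IHl; [intros; apply H; auto| discriminate]).
  specialize (H a (or_introl eq_refl)). lra.
Qed.

Lemma Rsum_const {A} (F : A -> R) l c : (forall x, In x l -> F x = c) -> Rsum F l = INR (length l) * c.
Proof.
  induction l; simpl; intros H. lra.
  rewrite IHl by auto. rewrite H by auto. destruct (length l); simpl; lra.
Qed.

Lemma Rsum_filter_split {A} (F : A -> R) (P : A -> bool) l :
  Rsum F l = Rsum F (filter P l) + Rsum F (filter (fun x => negb (P x)) l).
Proof. induction l; simpl. lra. destruct (P a); simpl; rewrite IHl; lra. Qed.

Lemma filter_filter' {A} (P Q : A -> bool) l : filter P (filter Q l) = filter (fun x => andb (Q x) (P x)) l.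
Proof. induction l as [|a l IH]; simpl; auto. destruct (Q a) eqn:E1; simpl; try destruct (P a) eqn:E2; simpl; rewrite ?IH; auto. Qed.

Definition memb (A : list vertex) (v : vertex) : bool :=
  if in_dec vertex_eq_dec v A then true else false.

Lemma memb_spec A v : memb A v = true <-> In v A.
Proof. unfold memb; destruct in_dec; split; auto; discriminate. Qed.

Lemma perm_filter_memb (A C : list vertex) : NoDup C -> NoDup A -> incl A C ->
  Permutation (filter (memb A) C) A.
Proof.
  intros. apply NoDup_Permutation; auto. apply NoDup_filter; auto.
  intros x; rewrite filter_In, memb_spec. split; [tauto| intros; split; auto].
Qed.

Lemma length_filter_memb (A C : list vertex) : NoDup C -> NoDup A -> incl A C ->
  length (filter (memb A) C) = length A.
Proof. intros; apply Permutation_length, perm_filter_memb; auto. Qed.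

Lemma NoDup_firstn {A} (l : list A) k : NoDup l -> NoDup (firstn k l).
Proof. intros H. rewrite <- (firstn_skipn k l) in H. eapply NoDup_app_remove_r; eauto. Qed.

Lemma incl_firstn {A} (l : list A) k : incl (firstn k l) l.
Proof. intros x Hx. rewrite <- (firstn_skipn k l). apply in_or_app; auto. Qed.

Lemma In_nonsink n m v : In v (nonsink_vertices n m) <-> valid_vertex n m v /\ v <> Sink.
Proof.
  unfold nonsink_vertices. rewrite in_app_iff, !in_map_iff.
  split.
  - intros [[i [<- Hi]]|[i [<- Hi]]]; apply in_seq in Hi; simpl; split; try lia; discriminate.
  - destruct v as [i|i|]; simpl; intros [H1 H2]; [left|right| congruence];
    exists i; split; auto; apply in_seq; lia.
Qed.

Lemma nonsink_S n m : nonsink_vertices n (S m) = nonsink_vertices n m ++ [Stn m].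
Proof. unfold nonsink_vertices. rewrite seq_S, map_app. simpl. now rewrite app_assoc. Qed.

Lemma nonsink_NoDup n m : NoDup (nonsink_vertices n m).
Proof.
  unfold nonsink_vertices. apply NoDup_app.
  - apply FinFun.Injective_map_NoDup; [intros a b H; now inversion H| apply seq_NoDup].
  - apply FinFun.Injective_map_NoDup; [intros a b H; now inversion H| apply seq_NoDup].
  - intros a Ha Hb. apply in_map_iff in Ha, Hb. destruct Ha as [x [<- _]]. destruct Hb as [y [H _]]. discriminate.
Qed.

Definition tst (p : vertex -> vertex) (w u : vertex) : bool :=
  if vertex_eq_dec (p u) w then true else false.

Lemma iter_fix (p : vertex -> vertex) v : p v = v -> forall k, Nat.iter k p v = v.
Proof. intros H k; induction k; simpl; auto. rewrite IHk; auto. Qed.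

Lemma Rsum_plus {A} (F G : A -> R) l : Rsum (fun u => F u + G u) l = Rsum F l + Rsum G l.
Proof. induction l; simpl; [lra| rewrite IHl; lra]. Qed.

Lemma Rsum_if {A} (D : A -> R) (P : A -> bool) l :
  Rsum (fun u => if P u then D u else 0) l = Rsum D (filter P l).
Proof. induction l; simpl; auto. destruct (P a); simpl; rewrite IHl; lra. Qed.

Section Split.
Variables (n m : nat) (z : nat -> point) (zBS : point) (s : nat -> point)
  (par : vertex -> vertex) (f : vertex -> R) (j : nat) (P : vertex -> bool) (q : point).
Hypothesis hT : is_FQST n z zBS m s par f.
Hypothesis hj : (j < m)%nat.
Hypothesis hP : forall u, In u (nonsink_vertices n m) -> P u = true -> par u = Stn j.
Hypothesis hPne : exists u, In u (nonsink_vertices n m) /\ P u = true.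
Hypothesis hq1 : forall k, (k < m)%nat -> q <> s k.
Hypothesis hq2 : forall i, (i < n)%nat -> q <> z i.
Hypothesis hq3 : q <> zBS.

Let NS := nonsink_vertices n m.
Definition FF := Rsum f (filter P NS).
Definition par2 v := if vertex_eq_dec v (Stn m) then Stn j else if P v then Stn m else par v.
Definition f2 v := if vertex_eq_dec v (Stn m) then FF else f v.
Definition s2 k := if Nat.eq_dec k m then q else s k.

Lemma NS_neq u : In u NS -> u <> Stn m.
Proof. intros H ->. apply In_nonsink in H. simpl in H. lia. Qed.

Lemma par_valid u : In u NS -> valid_vertex n m (par u).
Proof. destruct hT as (_&_&_&H&_). apply H. Qed.

Lemma par_neq_m u : In u NS -> par u <> Stn m.
Proof. intros H E. apply par_valid in H. rewrite E in H. simpl in H. lia. Qed.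

Lemma par2_NS u : In u NS -> par2 u = if P u then Stn m else par u.
Proof. intros H. unfold par2. destruct vertex_eq_dec; auto. exfalso; eapply NS_neq; eauto. Qed.

Lemma f2_NS u : In u NS -> f2 u = f u.
Proof. intros H. unfold f2. destruct vertex_eq_dec; auto. exfalso; eapply NS_neq; eauto. Qed.

Lemma pos2_NS u : In u NS -> Defs.pos z zBS s2 u = Defs.pos z zBS s u.
Proof.
  intros H. destruct u; simpl; auto. unfold s2. destruct Nat.eq_dec; auto.
  subst. exfalso; eapply NS_neq; eauto.
Qed.

Lemma pos2_par u : In u NS -> P u = false -> Defs.pos z zBS s2 (par u) = Defs.pos z zBS s (par u).
Proof.
  intros H _. pose proof (par_valid u H). destruct (par u); simpl; auto.
  unfold s2. destruct Nat.eq_dec; auto. simpl in H0. lia.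
Qed.

Lemma par2_m : par2 (Stn m) = Stn j.
Proof. unfold par2. destruct vertex_eq_dec; congruence. Qed.

Lemma filt_last (w : vertex) : w <> Stn j ->
  filter (fun u => if vertex_eq_dec (par2 u) w then true else false) [Stn m] = [].
Proof. intros H. cbn [filter]. rewrite par2_m. destruct vertex_eq_dec; congruence. Qed.

Lemma ch2_gen w : w <> Stn j -> w <> Stn m -> children n (S m) par2 w = children n m par w.
Proof.
  intros H1 H2. unfold children. rewrite nonsink_S, filter_app, filt_last, app_nil_r by auto.
  apply filter_ext_in. intros u Hu. rewrite par2_NS by auto.
  destruct (P u) eqn:E. rewrite hP by auto.
  destruct vertex_eq_dec; try congruence. destruct vertex_eq_dec; congruence. auto.
Qed.

Lemma inflow2_gen w : w <> Stn j -> w <> Stn m -> inflow n (S m) par2 f2 w = inflow n m par f w.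
Proof.
  intros. unfold inflow. rewrite ch2_gen by auto. apply Rsum_ext_in.
  intros u Hu. apply f2_NS. unfold children in Hu. apply filter_In in Hu. tauto.
Qed.

Lemma ch2_m : children n (S m) par2 (Stn m) = filter P NS.
Proof.
  unfold children. rewrite nonsink_S, filter_app, filt_last, app_nil_r
    by (intros E; inversion E; lia).
  apply filter_ext_in. intros u Hu. rewrite par2_NS by auto.
  destruct (P u) eqn:E. destruct vertex_eq_dec; congruence.
  destruct vertex_eq_dec; auto. exfalso; eapply par_neq_m; eauto.
Qed.

Lemma ch2_j : children n (S m) par2 (Stn j) =
  filter (fun u => andb (tst par (Stn j) u) (negb (P u))) NS ++ [Stn m].
Proof.
  unfold children. rewrite nonsink_S, filter_app. cbn [filter]. rewrite par2_m.
  destruct vertex_eq_dec as [_|C]; [|now elim C]. f_equal.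
  apply filter_ext_in. intros u Hu. rewrite par2_NS by auto. unfold tst.
  destruct (P u) eqn:E; cbn [negb]; rewrite ?Bool.andb_false_r, ?Bool.andb_true_r.
  - destruct vertex_eq_dec as [E2|]; [inversion E2; lia|]. auto.
  - destruct vertex_eq_dec; auto.
Qed.

Lemma filter_P_sub : filter (fun u => andb (tst par (Stn j) u) (P u)) NS = filter P NS.
Proof.
  apply filter_ext_in. intros u Hu. unfold tst. destruct (P u) eqn:E; simpl.
  rewrite hP by auto. destruct vertex_eq_dec as [|C]; auto.
  destruct vertex_eq_dec; auto.
Qed.

Lemma inflow_j_split : inflow n m par f (Stn j) =
  Rsum f (filter (fun u => andb (tst par (Stn j) u) (negb (P u))) NS) + FF.
Proof.
  unfold inflow, children, FF. fold NS.
  change (filter (fun u => if vertex_eq_dec (par u) (Stn j) then true else false) NS)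
    with (filter (tst par (Stn j)) NS).
  rewrite (Rsum_filter_split f P), !filter_filter'.
  rewrite filter_P_sub. lra.
Qed.


Lemma valid_mono v : valid_vertex n m v -> valid_vertex n (S m) v.
Proof. destruct v; simpl; auto; lia. Qed.

Lemma reach2 k : forall v, (v = Sink \/ In v NS) -> Nat.iter k par v = Sink ->
  exists k', Nat.iter k' par2 v = Sink.
Proof.
  induction k as [|k IH]; intros v Hv Hit.
  - exists 0%nat. exact Hit.
  - destruct Hv as [->|Hv]. { exists 0%nat; reflexivity. }
    rewrite Nat.iter_succ_r in Hit.
    assert (Hpv : par v = Sink \/ In (par v) NS).
    { destruct (vertex_eq_dec (par v) Sink); [left; auto| right].
      apply In_nonsink. split; auto. apply par_valid; auto. }
    destruct (IH (par v) Hpv Hit) as [k' Hk'].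
    destruct (P v) eqn:E.
    + exists (S (S k')). rewrite !Nat.iter_succ_r. rewrite (par2_NS v Hv), E.
      rewrite par2_m. rewrite <- (hP v Hv E). exact Hk'.
    + exists (S k'). rewrite Nat.iter_succ_r. rewrite (par2_NS v Hv), E. exact Hk'.
Qed.

Lemma FF_pos : 0 < FF.
Proof.
  unfold FF. destruct hT as (_&_&_&_&_&Hf&_). apply Rsum_pos.
  intros x Hx. apply filter_In in Hx. apply Hf. tauto.
  destruct hPne as [u [Hu HPu]]. intros E.
  assert (In u (filter P NS)) by (apply filter_In; auto). rewrite E in H. auto.
Qed.

Lemma FQST2 : is_FQST n z zBS (S m) s2 par2 f2.
Proof.
  pose proof hT as (Hs&Hsz&HsB&Hval&Hreach&Hf&Hsrc&Hstn&Hsink).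
  assert (HjNS : In (Stn j) NS) by (apply In_nonsink; simpl; split; [lia|discriminate]).
  split; [|split; [|split; [|split; [|split; [|split; [|split; [|split]]]]]]].
  - intros j1 j2 H1 H2. unfold s2. destruct Nat.eq_dec, Nat.eq_dec; subst; auto.
    + intros E. exfalso; apply (hq1 j2); auto; lia.
    + intros E. exfalso; apply (hq1 j1); auto; lia.
    + apply Hs; lia.
  - intros k i Hk Hi. unfold s2. destruct Nat.eq_dec; auto. apply Hsz; lia.
  - intros k Hk. unfold s2. destruct Nat.eq_dec; auto. apply HsB; lia.
  - intros v Hv. rewrite nonsink_S in Hv. apply in_app_or in Hv as [Hv|[<-|[]]].
    + rewrite par2_NS by auto. destruct (P v); simpl; [lia|]. apply valid_mono, par_valid; auto.
    + rewrite par2_m. simpl. lia.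
  - intros v Hv. rewrite nonsink_S in Hv. apply in_app_or in Hv as [Hv|[<-|[]]].
    + destruct (Hreach v Hv) as [k Hk]. eapply reach2; eauto.
    + destruct (Hreach (Stn j) HjNS) as [k Hk].
      destruct (reach2 k (Stn j) (or_intror HjNS) Hk) as [k' Hk'].
      exists (S k'). rewrite Nat.iter_succ_r, par2_m. exact Hk'.
  - intros v Hv. rewrite nonsink_S in Hv. apply in_app_or in Hv as [Hv|[<-|[]]].
    + rewrite f2_NS by auto. auto.
    + unfold f2. destruct vertex_eq_dec as [_|C]; [|now elim C]. apply FF_pos.
  - intros i Hi. rewrite inflow2_gen by discriminate.
    rewrite f2_NS. apply Hsrc; auto. apply In_nonsink; simpl; split; [lia|discriminate].
  - intros k Hk. destruct (Nat.eq_dec k m) as [->|Hkm].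
    + unfold inflow. rewrite ch2_m. unfold f2 at 1. destruct vertex_eq_dec as [_|C]; [|now elim C].
      unfold FF. apply Rsum_ext_in. intros u Hu. apply filter_In in Hu. symmetry; apply f2_NS; tauto.
    + destruct (Nat.eq_dec k j) as [->|Hkj].
      * unfold inflow at 1. rewrite ch2_j, Rsum_app. simpl.
        unfold f2 at 3. destruct vertex_eq_dec as [_|C]; [|now elim C].
        rewrite f2_NS by auto. rewrite Hstn by auto. rewrite inflow_j_split.
        rewrite (Rsum_ext_in f2 f). lra.
        intros u Hu. apply filter_In in Hu. apply f2_NS; tauto.
      * rewrite inflow2_gen by congruence. rewrite f2_NS. apply Hstn; lia.
        apply In_nonsink; simpl; split; [lia|discriminate].
  - rewrite inflow2_gen by discriminate. auto.
Qed.

Lemma deg2_m : degree n (S m) par2 (Stn m) = S (length (filter P NS)).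
Proof. unfold degree. rewrite ch2_m. reflexivity. Qed.

Lemma deg2_j : degree n (S m) par2 (Stn j) =
  S (S (length (filter (fun u => andb (tst par (Stn j) u) (negb (P u))) NS))).
Proof. unfold degree. rewrite ch2_j, length_app. simpl. lia. Qed.

Lemma deg2_gen k : k <> j -> k <> m -> degree n (S m) par2 (Stn k) = degree n m par (Stn k).
Proof. intros. unfold degree. rewrite ch2_gen by congruence. reflexivity. Qed.

Lemma cost2 : cost n z zBS (S m) s2 par2 f2 = cost n z zBS m s par f +
  Rsum (fun u => f u * (dist2 (Defs.pos z zBS s u) q - dist2 (Defs.pos z zBS s u) (s j))) (filter P NS)
  + FF * dist2 q (s j).
Proof.
  unfold cost. rewrite nonsink_S, Rsum_app. cbn [Rsum fold_right].
  rewrite par2_m. unfold f2 at 2. destruct vertex_eq_dec as [_|C]; [|now elim C].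
  replace (Defs.pos z zBS s2 (Stn m)) with q by (simpl; unfold s2; destruct Nat.eq_dec; congruence).
  replace (Defs.pos z zBS s2 (Stn j)) with (s j) by (simpl; unfold s2; destruct Nat.eq_dec; [lia|auto]).
  fold NS.
  rewrite (Rsum_ext_in _ (fun u => f u * dist2 (Defs.pos z zBS s u) (Defs.pos z zBS s (par u)) +
     (if P u then f u * (dist2 (Defs.pos z zBS s u) q - dist2 (Defs.pos z zBS s u) (s j)) else 0))).
  - rewrite Rsum_plus, Rsum_if. lra.
  - intros u Hu. rewrite f2_NS, pos2_NS, par2_NS by auto. destruct (P u) eqn:E.
    + replace (Defs.pos z zBS s2 (Stn m)) with q by (simpl; unfold s2; destruct Nat.eq_dec; congruence).
      rewrite (hP u) by auto. simpl. ring.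
    + rewrite pos2_par by auto. ring.
Qed.

End Split.

Lemma quad_id (f : vertex -> R) (g : vertex -> point) sx sy U1 U2 t l :
  Rsum (fun u => f u * (dist2 (g u) (sx + t*U1, sy + t*U2) - dist2 (g u) (sx, sy))) l =
  -2*t*(U1 * Rsum (fun u => f u * (fst (g u) - sx)) l + U2 * Rsum (fun u => f u * (snd (g u) - sy)) l)
  + t^2*(U1^2+U2^2) * Rsum f l.
Proof. induction l; simpl; [ring|]. rewrite IHl. unfold dist2; simpl. ring. Qed.

Lemma avoid (c : point) U1 U2 (HU : U1 <> 0 \/ U2 <> 0) (L : list point) :
  forall a b, a < b -> exists t, a < t < b /\ ~ In (fst c + t*U1, snd c + t*U2) L.
Proof.
  induction L as [|p L IH]; intros a b Hab.
  - exists ((a+b)/2). split; [lra| simpl; auto].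
  - destruct (IH a b Hab) as [t [Ht Hn]].
    destruct (classic ((fst c + t*U1, snd c + t*U2) = p)) as [E|E].
    + destruct (IH a t (proj1 Ht)) as [t' [Ht' Hn']].
      exists t'. split; [lra|]. intros [E'|E']; [|auto].
      rewrite <- E in E'. injection E' as E1 E2.
      assert (t' = t).
      { destruct HU as [HU|HU]; [apply (Rmult_eq_reg_r U1)|apply (Rmult_eq_reg_r U2)]; auto; lra. }
      lra.
    + exists t. split; auto. intros [E'|E']; auto.
Qed.

Lemma choose_A (C : list vertex) (w1 w2 : vertex -> R) k : NoDup C -> (1 <= k)%nat ->
  (k+1 <= length C)%nat -> (forall c, In c C -> w1 c <> 0 \/ w2 c <> 0) ->
  exists A, incl A C /\ NoDup A /\ length A = k /\ (Rsum w1 A <> 0 \/ Rsum w2 A <> 0).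
Proof.
  intros HC Hk Hlen Hw. apply NNPP. intros Hno.
  assert (Hall : forall A, incl A C -> NoDup A -> length A = k -> Rsum w1 A = 0 /\ Rsum w2 A = 0).
  { intros A H1 H2 H3. split; apply NNPP; intros H4; apply Hno; exists A; auto. }
  destruct C as [|x C']; [simpl in Hlen; lia|].
  assert (Heq : forall y, In y (x :: C') -> w1 y = w1 x /\ w2 y = w2 x).
  { intros y Hy. destruct (vertex_eq_dec y x) as [->|Hyx]; [auto|].
    set (D := filter (fun c => negb (memb [x;y] c)) (x :: C')).
    assert (HxyC : incl [x;y] (x :: C')).
    { intros v [<-|[<-|[]]]; [left|]; auto. }
    assert (HDup : NoDup [x;y]).
    { constructor. intros [E|[]]; congruence. constructor; [auto| constructor]. }
    assert (HlD : length D = (length (x :: C') - 2)%nat).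
    { pose proof (filter_length (memb [x;y]) (x :: C')) as E.
      rewrite length_filter_memb in E by auto. unfold D. simpl in E |- *. lia. }
    assert (HDnd : NoDup D) by (apply NoDup_filter; auto).
    set (B := firstn (k-1) D).
    assert (HlB : length B = (k-1)%nat) by (apply firstn_length_le; lia).
    assert (HBD : incl B D) by apply incl_firstn.
    assert (HDC : incl D (x :: C')) by apply incl_filter.
    assert (HnotD : forall v, In v [x;y] -> ~ In v B).
    { intros v Hv HvB. apply HBD in HvB. unfold D in HvB. apply filter_In in HvB.
      destruct HvB as [_ Hb]. apply (proj2 (memb_spec _ _)) in Hv. rewrite Hv in Hb. discriminate. }
    assert (HBnd : NoDup B) by (apply NoDup_firstn; auto).
    destruct (Hall (x :: B)) as [Ha1 Ha2].
    { intros v [<-|Hv]; [left; auto| auto]. }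
    { constructor; auto. apply HnotD; left; auto. }
    { simpl; lia. }
    destruct (Hall (y :: B)) as [Hb1 Hb2].
    { intros v [<-|Hv]; [auto| auto]. }
    { constructor; auto. apply HnotD; right; left; auto. }
    { simpl; lia. }
    simpl in Ha1, Ha2, Hb1, Hb2. split; lra. }
  destruct (Hall (firstn k (x :: C'))) as [H1 H2].
  - apply incl_firstn.
  - apply NoDup_firstn; auto.
  - apply firstn_length_le; lia.
  - rewrite (Rsum_const _ _ (w1 x)) in H1 by (intros y Hy; apply Heq, (incl_firstn _ k); auto).
    rewrite (Rsum_const _ _ (w2 x)) in H2 by (intros y Hy; apply Heq, (incl_firstn _ k); auto).
    rewrite firstn_length_le in H1, H2 by lia.
    assert (INR k <> 0) by (apply not_0_INR; lia).
    destruct (Hw x (or_introl eq_refl)) as [Hx|Hx]; apply Hx.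
    + apply (Rmult_eq_reg_l (INR k)); auto; lra.
    + apply (Rmult_eq_reg_l (INR k)); auto; lra.
Qed.

Theorem mainTheorem7 (n : nat) (z : nat -> point) (zBS : point) (phi : nat)
  (hn : (1 <= n)%nat)
  (hz : forall i1 i2, (i1 < n)%nat -> (i2 < n)%nat -> z i1 = z i2 -> i1 = i2)
  (hBS : forall i, (i < n)%nat -> z i <> zBS)
  (hphi : (3 <= phi)%nat)
  (m : nat) (s : nat -> point) (par : vertex -> vertex) (f : vertex -> R)
  (hT : is_MFQST phi n z zBS m s par f) :
  forall j, (j < m)%nat ->
    (phi <= degree n m par (Stn j) <= 2 * phi - 3)%nat.
Proof.
  intros j Hj. destruct hT as (HF & Hdeg & Hmin).
  split; [apply Hdeg; auto|].
  destruct (Compare_dec.le_lt_dec (degree n m par (Stn j)) (2*phi-3)) as [|Hgt]; auto. exfalso.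
  set (C := children n m par (Stn j)) in *.
  assert (HlenC : (2*phi-3 <= length C)%nat) by (unfold degree in Hgt; fold C in Hgt; lia).
  pose proof HF as (Hs&Hsz&HsB&Hval&Hreach&Hf&Hsrc&Hstn&Hsink).
  set (NS := nonsink_vertices n m) in *.
  assert (HCin : forall c, In c C -> In c NS /\ par c = Stn j).
  { intros c Hc. unfold C, children in Hc. apply filter_In in Hc. destruct Hc as [H1 H2].
    destruct vertex_eq_dec; [auto|discriminate]. }
  assert (Hnoself : forall v, In v NS -> par v <> v).
  { intros v Hv E. destruct (Hreach v Hv) as [k Hk]. rewrite iter_fix in Hk by auto.
    subst. apply In_nonsink in Hv. tauto. }
  set (sx := fst (s j)). set (sy := snd (s j)).
  set (w1 := fun u => f u * (fst (Defs.pos z zBS s u) - sx)).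
  set (w2 := fun u => f u * (snd (Defs.pos z zBS s u) - sy)).
  assert (Hw : forall c, In c C -> w1 c <> 0 \/ w2 c <> 0).
  { intros c Hc. destruct (HCin c Hc) as [HcNS Hpc].
    assert (Hne : Defs.pos z zBS s c <> s j).
    { pose proof HcNS as HcNS'. apply In_nonsink in HcNS'.
      destruct c as [i|k|]; simpl in *; destruct HcNS' as [Hv Hns].
      - intros E. apply (Hsz j i); auto.
      - intros E. assert (k = j) by (apply Hs; auto). subst.
        apply (Hnoself (Stn j)); auto.
      - now elim Hns. }
    assert (0 < f c) by (apply Hf; auto).
    destruct (Req_dec (fst (Defs.pos z zBS s c)) sx) as [E1|E1];
    destruct (Req_dec (snd (Defs.pos z zBS s c)) sy) as [E2|E2].
    - exfalso; apply Hne. apply injective_projections; auto.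
    - right. unfold w2. apply Rmult_integral_contrapositive; split; lra.
    - left. unfold w1. apply Rmult_integral_contrapositive; split; lra.
    - left. unfold w1. apply Rmult_integral_contrapositive; split; lra. }
  destruct (choose_A C w1 w2 (phi-1)) as [A [HAC [HAnd [HAl HAw]]]].
  { apply NoDup_filter, nonsink_NoDup. }
  { lia. } { lia. } { exact Hw. }
  set (P := memb A).
  assert (hP : forall u, In u NS -> P u = true -> par u = Stn j).
  { intros u _ Hu. apply memb_spec in Hu. apply HCin, HAC; auto. }
  assert (hPne : exists u, In u NS /\ P u = true).
  { destruct A as [|a A']; [simpl in HAl; lia|]. exists a. split.
    apply HCin, HAC; left; auto. apply memb_spec; left; auto. }
  assert (HpermA : Permutation (filter P NS) A).
  { apply perm_filter_memb; [apply nonsink_NoDup|auto| intros x Hx; apply HCin, HAC; auto]. }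
  set (U1 := Rsum w1 (filter P NS)). set (U2 := Rsum w2 (filter P NS)).
  assert (HU : U1 <> 0 \/ U2 <> 0).
  { unfold U1, U2. rewrite !(Rsum_perm _ _ _ HpermA). auto. }
  pose proof (FF_pos n m z zBS s par f P HF hPne) as HFF.
  set (L := map s (seq 0 m) ++ map z (seq 0 n) ++ [zBS]).
  destruct (avoid (s j) U1 U2 HU L 0 (/ FF n m f P)) as [t [Ht HtL]].
  { apply Rinv_0_lt_compat; auto. }
  set (q := (fst (s j) + t * U1, snd (s j) + t * U2)) in *.
  assert (hq1 : forall k, (k < m)%nat -> q <> s k).
  { intros k Hk E. apply HtL. unfold L. apply in_or_app. left. rewrite E. apply in_map, in_seq. lia. }
  assert (hq2 : forall i, (i < n)%nat -> q <> z i).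
  { intros i Hi E. apply HtL. unfold L. apply in_or_app. right. apply in_or_app. left.
    rewrite E. apply in_map, in_seq. lia. }
  assert (hq3 : q <> zBS).
  { intros E. apply HtL. unfold L. apply in_or_app. right. apply in_or_app. right. rewrite E. left; auto. }
  pose proof (FQST2 n m z zBS s par f j P q HF Hj hP hPne hq1 hq2 hq3) as HF2.
  assert (Hdeg2 : steiner_deg_bound n (S m) (par2 m par j P) phi).
  { intros k Hk. destruct (Nat.eq_dec k m) as [->|Hkm].
    - rewrite (deg2_m n m z zBS s par f j P HF Hj).
      fold NS. rewrite (Permutation_length HpermA). lia.
    - destruct (Nat.eq_dec k j) as [->|Hkj].
      + rewrite deg2_j by auto.
        rewrite <- (filter_filter' (fun u => negb (P u)) (tst par (Stn j))).
        change (filter (tst par (Stn j)) (nonsink_vertices n m)) with C.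
        pose proof (filter_length P C) as E.
        assert (length (filter P C) = length A).
        { apply length_filter_memb; auto. apply NoDup_filter, nonsink_NoDup. }
        lia.
      + rewrite deg2_gen by auto. apply Hdeg. lia. }
  specialize (Hmin _ _ _ _ HF2 Hdeg2).
  rewrite (cost2 n m z zBS s par f j P q HF Hj hP) in Hmin.
  replace (s j) with (sx, sy) in Hmin by (unfold sx, sy; destruct (s j); auto).
  unfold q in Hmin. fold sx sy in Hmin.
  rewrite quad_id in Hmin. change (nonsink_vertices n m) with NS in Hmin. fold w1 w2 in Hmin. fold U1 U2 in Hmin.
  change (Rsum f (filter P NS)) with (FF n m f P) in Hmin.
  unfold dist2 in Hmin. simpl in Hmin.
  set (FFv := FF n m f P) in *.
  assert (HN : 0 < U1^2 + U2^2).
  { destruct HU as [HU|HU]; pose proof (Rsqr_pos_lt _ HU) as H0; unfold Rsqr in H0; nra. }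
  assert (HtF : t * FFv < 1).
  { destruct Ht as [_ Ht]. apply (Rmult_lt_compat_r FFv) in Ht; auto.
    rewrite Rinv_l in Ht; lra. }
  assert (Hneg : 2 * t * (U1^2+U2^2) * (t * FFv - 1) < 0).
  { assert (0 < 2 * t * (U1^2+U2^2)) by (apply Rmult_lt_0_compat; lra).
    apply Rmult_lt_compat_l with (r := 2 * t * (U1^2+U2^2)) in HtF; lra. }
  nra.
Qed.
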